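(* Let $\mathfrak g=\mathfrak k\oplus\mathfrak m$ be a Pauli-spanned Cartan decomposition, and let $b_1\neq b_2$ be two commuting Pauli strings in $\tilde{\mathfrak m}$ lying in the same connected component of the frustration graph of $\mathfrak g$. Then there exists a Pauli string $k\in\tilde{\mathfrak k}$ with $[k,b_1]\neq0$ and $[k,b_2]\neq0$; i.e. $\tilde{\mathfrak k}^{12}$ is non-empty.
   Context: Pauli strings on $n$ qubits are tensor products of $I,X,Y,Z$, not all identity; two Pauli strings either commute or anticommute. A Pauli-spanned Cartan decomposition is $\mathfrak g=\mathfrak k\oplus\mathfrak m\subseteq\mathfrak{su}(2^n)$ with $\mathfrak k=\mathrm{span}_{i\mathbb R}\tilde{\mathfrak k}$, $\mathfrak m=\mathrm{span}_{i\mathbb R}\tilde{\mathfrak m}$, $\mathfrak g=\mathrm{span}_{i\mathbb R}\tilde{\mathfrak g}$ with $\tilde{\mathfrak g}=\tilde{\mathfrak k}\sqcup\tilde{\mathfrak m}$ the set of all Pauli strings (up to phase) $\sigma$ with $i\sigma\in\mathfrak g$, and $[\mathfrak k,\mathfrak k]\subseteq\mathfrak k$, $[\mathfrak m,\mathfrak m]\subseteq\mathfrak k$, $[\mathfrak k,\mathfrak m]\subseteq\mathfrak m$. The frustration graph of $\mathfrak g$ has vertex set $\tilde{\mathfrak g}$, with edges between anticommuting pairs. For Pauli strings $b_1,b_2,\dots$ and disjoint index lists, $\tilde{\mathfrak k}^{i_1i_2\dots}_{j_1j_2\dots}$ is the set of $k\in\tilde{\mathfrak k}$ anticommuting with every $b_{i_p}$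 and commuting with every $b_{j_q}$ (no condition on other indices). *)

(* Defs.v *)
From mathcomp Require Import ssreflect ssrfun ssrbool eqtype ssrnat seq choice fintype finfun bigop finset fingraph.
Set Implicit Arguments. Unset Strict Implicit. Unset Printing Implicit Defensive.

(* A single-qubit Pauli letter (up to phase) is an element of 'I_4, encoded in
   symplectic form a = x + 2 z:  0 = I, 1 = X, 2 = Z, 3 = Y. *)
Definition pauli (n : nat) := {ffun 'I_n -> 'I_4}.

Definition xbit (a : 'I_4) : bool := odd a.
Definition zbit (a : 'I_4) : bool := 2 <= a.

(* Product of two single-qubit letters, up to phase (XOR of symplectic bits). *)
Definition pmul1 (a b : 'I_4) : 'I_4 :=
  inord ((xbit a (+) xbit b) + 2 * (zbit a (+) zbit b)).

Definition pmul n (p q : pauli n) : pauli n := [ffun i => pmul1 (p i) (q i)].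

Definition nontrivial n (p : pauli n) : bool := [exists i, p i != ord0].

Definition anticomm1 (a b : 'I_4) : bool := [&& a != ord0, b != ord0 & a != b].

Definition anticommute n (p q : pauli n) : bool :=
  odd #|[set i | anticomm1 (p i) (q i)]|.
Definition commute n (p q : pauli n) : bool := ~~ anticommute p q.

(* [span_iR A, span_iR B] ⊆ span_iR C for sets of Pauli strings: the commutator
   of two Pauli strings is 0 if they commute, and a nonzero real multiple of
   i * (a b) (a Pauli string up to phase) if they anticommute. *)
Definition lie_closed n (A B C : {set pauli n}) : Prop :=
  forall a b, a \in A -> b \in B -> anticommute a b -> pmul a b \in C.

(* Pauli-spanned Cartan decomposition g = k ⊕ m, given by the disjoint Pauli
   bases k~ = K and m~ = M (g~ = K ∪ M). *)
Definition pauli_cartan n (K M : {set pauli n}) : Prop :=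
  [/\ [disjoint K & M],
      (forall p, p \in K :|: M -> nontrivial p),
      lie_closed K K K,
      lie_closed M M K &
      lie_closed K M M].

Definition frustration n (G : {set pauli n}) : rel (pauli n) :=
  fun p q => [&& p \in G, q \in G & anticommute p q].

(* k~^{I}_{J}: elements of K anticommuting with every b_i (i in I) and
   commuting with every b_j (j in J). *)
Definition ksub n (K : {set pauli n}) (anti comm : seq (pauli n)) : {set pauli n} :=
  [set k in K | all (anticommute k) anti && all (commute k) comm].

(* Main.v *)
Require Import Defs.
From mathcomp Require Import ssreflect ssrfun ssrbool eqtype ssrnat seq choice fintype finfun bigop finset fingraph.
From mathcomp Require Import zify.
Set Implicit Arguments. Unset Strict Implicit.

Lemma ac1D : [forall a : 'I_4, forall b : 'I_4, forall c : 'I_4,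
  anticomm1 (pmul1 a b) c == anticomm1 a c (+) anticomm1 b c].
Proof. apply/forallP=> a; apply/forallP=> b; apply/forallP=> c.
case: a => [[|[|[|[|//]]]] ?]; case: b => [[|[|[|[|//]]]] ?]; case: c => [[|[|[|[|//]]]] ?];
 rewrite /anticomm1 /pmul1 /xbit /zbit /= -!val_eqE /= ?inordK //.
Qed.

Lemma card_xor (T : finType) (P Q : pred T) :
  odd #|[set i | P i (+) Q i]| = odd #|[set i | P i]| (+) odd #|[set i | Q i]|.
Proof.
set A := [set i | P i]; set B := [set i | Q i].
have -> : [set i | P i (+) Q i] = (A :|: B) :\: (A :&: B).
  by apply/setP=> i; rewrite !inE; case: (P i); case: (Q i).
rewrite cardsD.
have -> : (A :|: B) :&: (A :&: B) = A :&: B.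
  by apply/setP=> i; rewrite !inE; case: (P i); case: (Q i).
have h1 := cardsUI A B.
have h2 : #|A :&: B| <= #|A :|: B|.
  by apply: subset_leq_card; apply/subsetP=> i; rewrite !inE => /andP[->].
have -> : #|A :|: B| - #|A :&: B| = #|A| + #|B| - 2 * #|A :&: B| by lia.
have h3 : 2 * #|A :&: B| <= #|A| + #|B| by lia.
have -> : odd (#|A| + #|B| - 2 * #|A :&: B|) = odd (#|A| + #|B|).
  by rewrite -{2}(subnK h3) oddD oddM /= addbF.
by rewrite oddD.
Qed.

Lemma acD n (a b c : pauli n) :
  anticommute (pmul a b) c = anticommute a c (+) anticommute b c.
Proof.
rewrite /anticommute -card_xor; apply: congr1; apply: eq_card => i; rewrite !inE ffunE.
by move/forallP: ac1D => /(_ (a i)) /forallP /(_ (b i)) /forallP /(_ (c i)) /eqP.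
Qed.

Lemma acC n (a b : pauli n) : anticommute a b = anticommute b a.
Proof.
rewrite /anticommute; apply: congr1; apply: eq_card => i; rewrite !inE /anticomm1.
by case: (a i == ord0); case: (b i == ord0); rewrite ?andbF ?andbT /= 1?eq_sym.
Qed.

Lemma pmulC n (a b : pauli n) : pmul a b = pmul b a.
Proof. by apply/ffunP=> i; rewrite !ffunE /pmul1 addbC [zbit (b i) (+) _]addbC. Qed.

Lemma acxx n (a : pauli n) : anticommute a a = false.
Proof.
rewrite /anticommute (_ : [set i | _] = set0) ?cards0 //.
by apply/setP=> i; rewrite !inE /anticomm1 eqxx !andbF.
Qed.

Section Main.
Variables (n : nat) (G : {set pauli n}).
Hypothesis hG : forall a b, a \in G -> b \in G -> anticommute a b -> pmul a b \in G.

Definition near (x z : pauli n) :=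
  x = z \/ anticommute x z \/ exists2 w, w \in G & anticommute w x && anticommute w z.

Lemma near_step x y z : y \in G -> anticommute x y -> near y z -> near x z.
Proof.
move=> yG axy [<-|[ayz|[w wG /andP[awy awz]]]]; first by right; left.
- case: (eqVneq x z) => [->|nxz]; first by left.
  case axz: (anticommute x z); first by right; left.
  by right; right; exists y => //; rewrite acC axy ayz.
- case: (eqVneq x z) => [->|nxz]; first by left.
  case axz: (anticommute x z); first by right; left.
  case ayz: (anticommute y z); first by right; right; exists y => //; rewrite acC axy ayz.
  case awx: (anticommute w x); first by right; right; exists w => //; rewrite awx.
  right; right; exists (pmul w y); first by apply: hG => //; rewrite acC.
  by rewrite !acD awx awz ayz (acC y x) axy.
Qed.

Lemma near_connect x z : connect (frustration G) x z -> near x z.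
Proof.
move/connectP=> [p]; elim: p x => [|y p IH] x /=; first by move=> _ ->; left.
move=> /andP[/and3P[xG yG axy] pp] ez.
exact: (near_step yG axy (IH _ pp ez)).
Qed.
End Main.

Theorem corollaryC1 (n : nat) (K M : {set pauli n}) (b1 b2 : pauli n) :
  pauli_cartan K M ->
  b1 \in M -> b2 \in M -> b1 != b2 -> commute b1 b2 ->
  connect (frustration (K :|: M)) b1 b2 ->
  ksub K [:: b1; b2] [::] != set0.
Proof.
move=> [_ _ hKK hMM hKM] b1M b2M nb cb /near_connect.
have hG : forall a b, a \in K :|: M -> b \in K :|: M -> anticommute a b -> pmul a b \in K :|: M.
  move=> a b; rewrite !inE => /orP[aK|aM] /orP[bK|bM] ab.
  - by rewrite hKK.
  - by rewrite hKM ?orbT.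
  - by rewrite pmulC hKM ?orbT // acC.
  - by rewrite hMM.
case/(_ hG) => [e|[a|[w wG /andP[w1 w2]]]]; first by rewrite e eqxx in nb.
  by rewrite /commute a in cb.
apply/set0Pn; move: wG; rewrite inE => /orP[wK|wM].
  by exists w; rewrite !inE wK /= w1 w2.
exists (pmul w b1); rewrite !inE hMM //= !acD w1 w2 /=.
by move: cb; rewrite /commute acxx => /negbTE ->.
Qed.
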